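(* Let $M\in\mathcal{B}_{\infty}$ be such that $\mu(M)<\infty$. Then, $L^{p}(M,\mu)$ is separable for every $1\leq p <\infty$.
   Context: Let $\mathcal{B}$ be the Borel $\sigma$-algebra of $\mathbb{R}$, $\lambda$ the Lebesgue measure, and $\mathcal{B}_{\infty}$ the $\sigma$-algebra on $\mathbb{R}^{\mathbb{N}}$ generated by the cylinder sets $\prod_{i=1}^{m}C_{i}\times\prod_{i=m+1}^{\infty}\mathbb{R}$ with $C_i\in\mathcal{B}$, $m\in\mathbb{N}$. Let $\mathcal{F}(\mathcal{B},\lambda)$ be the set of finite rectangles $\prod_{i\in\mathbb{N}}C_{i}$ with $C_i\in\mathcal{B}$ and $\prod_{i}\lambda(C_i)\in[0,\infty)$, with $\mathrm{vol}(\prod_{i}C_i):=\prod_i\lambda(C_i)$. The measure $\mu$ is the restriction to $\mathcal{B}_{\infty}$ of the outer measure $\mu^{\ast}(A):=\inf\{\sum_{n}\mathrm{vol}(\mathscr{C}_{n}) : \mathscr{C}_{n}\in\mathcal{F}(\mathcal{B},\lambda),\ A\subset\bigcup_{n}\mathscr{C}_{n}\}$ ($\inf\varnothing=\infty$). *)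

(* Defs.v *)
From HB Require Import structures.
From mathcomp Require Import all_boot all_order all_algebra.
From mathcomp Require Import all_classical all_reals all_analysis.
Set Implicit Arguments. Unset Strict Implicit. Unset Printing Implicit Defensive.
Import Order.TTheory GRing.Theory Num.Theory numFieldNormedType.Exports.
Local Open Scope classical_set_scope.
Local Open Scope ring_scope.

(* The space R^N is modelled as [nat -> R]; coordinate i of the paper is
   coordinate (i-1) here. *)
Section InfiniteProduct.
Variable R : realType.

Notation RN := (nat -> R).

Definition cylinders : set (set RN) :=
  [set A | exists (m : nat) (C : nat -> set R),
     (forall i, measurable (C i)) /\
     A = [set x : RN | forall i, (i < m)%N -> C i (x i)]].

Definition RNinf : measurableType _ := g_sigma_algebraType cylinders.

Definition rect (C : nat -> set R) : set RN :=
  [set x | forall i, C i (x i)].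

Definition vol_partial (C : nat -> set R) (n : nat) : \bar R :=
  (\prod_(i < n) lebesgue_measure (C i))%E.

Definition finite_rect (C : nat -> set R) : Prop :=
  (forall i, measurable (C i)) /\
  exists r : R, vol_partial C n @[n --> \oo] --> r%:E.

Definition vol (C : nat -> set R) : \bar R := limn (vol_partial C).

(* the outer measure mu^* (ereal_inf set0 = +oo) *)
Definition mu_star (A : set RN) : \bar R :=
  ereal_inf [set s : \bar R | exists Cs : nat -> nat -> set R,
     (forall n, finite_rect (Cs n)) /\
     A `<=` \bigcup_n rect (Cs n) /\
     s = (\sum_(0 <= n <oo) vol (Cs n))%E].

End InfiniteProduct.

(* Main.v *)
Require Import Defs.
From HB Require Import structures.
From mathcomp Require Import all_boot all_order all_algebra.
From mathcomp Require Import all_classical all_reals all_analysis.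
From mathcomp Require Import ring lra.
Import Order.TTheory GRing.Theory Num.Theory numFieldNormedType.Exports.
Set Implicit Arguments. Unset Strict Implicit. Unset Printing Implicit Defensive.
Local Open Scope classical_set_scope.
Local Open Scope ring_scope.
Inductive fm := FAt of nat & rat | FEmp | FCmp of fm | FUn of fm & fm.

Fixpoint fm_enc (t : fm) : GenTree.tree (nat * rat) :=
  match t with
  | FAt i q => GenTree.Leaf (i, q)
  | FEmp => GenTree.Node 0 [::]
  | FCmp t1 => GenTree.Node 1 [:: fm_enc t1]
  | FUn t1 t2 => GenTree.Node 2 [:: fm_enc t1; fm_enc t2]
  end.

Fixpoint fm_dec (t : GenTree.tree (nat * rat)) : option fm :=
  match t with
  | GenTree.Leaf (i, q) => Some (FAt i q)
  | GenTree.Node 0 [::] => Some FEmp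
  | GenTree.Node 1 [:: t1] => omap FCmp (fm_dec t1)
  | GenTree.Node 2 [:: t1; t2] =>
      match fm_dec t1, fm_dec t2 with
      | Some a, Some b => Some (FUn a b)
      | _, _ => None
      end
  | _ => None
  end.

Lemma fm_encK : pcancel fm_enc fm_dec.
Proof. by elim=> //= [t -> | t1 -> t2 ->]. Qed.

HB.instance Definition _ := Countable.copy fm (pcan_type fm_encK).


Section S.
Variable R : realType.
Definition Gq : set (set (nat -> R)) :=
  [set A | exists i q, A = [set x | ratr q < x i]].
Definition RNq := g_sigma_algebraType Gq.

Lemma coord_mq (i : nat) : measurable_fun [set: RNq] (fun x : RNq => x i).
Proof.
apply: (measurability _ (measurable_realfun.RGenOInfty.measurableE R)).
move=> _ [_ [y ->] <-].
have -> : [set: RNq] `&` (fun x : RNq => x i) @^-1` `]y, +oo[%classic =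
  \bigcup_(q : rat) (if (y < ratr q) then [set x : RNq | ratr q < x i] else set0).
  apply/seteqP; split => x /=.
    rewrite in_itv/= andbT => -[_ yx].
    have [q] := rat_in_itvoo yx; rewrite in_itv/= => /andP[h1 h2].
    by exists q => //; rewrite h1.
  move=> [q _]; case: ifPn => // yq /= qx; split => //.
  by rewrite in_itv/= andbT (lt_trans yq).
apply: bigcupT_measurable_rat => q; case: ifPn => _ //.
by apply: sub_sigma_algebra; exists i, q.
Qed.

Lemma meas_sub_Gq (A : set (RNinf R)) : measurable A -> <<s Gq>> A.
Proof.
move=> mA; apply: (smallest_sub _ _ mA); first exact: smallest_sigma_algebra.
move=> _ [m [C [mC ->]]].
elim: m => [|m IH].
  have -> : [set x : nat -> R | forall i, (i < 0)%N -> C i (x i)] = setT.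
    by apply/seteqP; split => x //= _ i.
  exact: (@measurableT _ RNq).
have -> : [set x : nat -> R | forall i, (i < m.+1)%N -> C i (x i)] =
  [set x : nat -> R | forall i, (i < m)%N -> C i (x i)] `&`
  ((fun x : RNq => x m) @^-1` C m).
  apply/seteqP; split => x /=.
    by move=> h; split => [i im|]; apply: h => //; exact: ltnW.
  move=> [h1 h2] i; rewrite ltnS leq_eqVlt => /orP[/eqP ->//|]; exact: h1.
apply: (@measurableI _ RNq) => //.
by rewrite -[X in measurable X]setTI; exact: coord_mq.
Qed.
End S.


Lemma bigsetU_memP (T : Type) (F : nat -> set T) n x :
  (\big[setU/set0]_(k < n) F k) x <-> exists2 k, (k < n)%N & F k x.
Proof.
elim: n => [|n IH].
  by rewrite big_ord0; split => // -[].
rewrite big_ord_recr /=; split.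
  move=> [/IH [k kn Fk]|Fn]; last by exists n.
  by exists k => //; exact: ltnW.
move=> [k]; rewrite ltnS leq_eqVlt => /orP[/eqP ->|kn Fk]; first by right.
by left; apply/IH; exists k.
Qed.

Section S3.
Variable R : realType.
Local Notation T := (RNinf R).

Fixpoint interp (t : fm) : set T :=
  match t with
  | FAt i q => [set x : nat -> R | ratr q < x i]
  | FEmp => set0
  | FCmp t1 => ~` interp t1
  | FUn t1 t2 => interp t1 `|` interp t2
  end.

Lemma interp_meas t : measurable (interp t).
Proof.
elim: t => [i q| |t IH|t1 IH1 t2 IH2] /=.
- apply: sub_sigma_algebra.
  exists i.+1, (fun j => if j == i then `]ratr q, +oo[%classic else setT).
  split; first by move=> j; case: ifPn => _ //; exact: measurable_itv.
  apply/seteqP; split => x /=.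
    move=> h j _; case: ifPn => [/eqP ->|//]; by rewrite /= in_itv/= andbT.
  by move/(_ i (ltnSn i)); rewrite eqxx /= in_itv/= andbT.
- exact: measurable0.
- exact: measurableC.
- exact: measurableU.
Qed.

Definition sd (A B : set T) := (A `\` B) `|` (B `\` A).

Lemma sd_meas A B : measurable A -> measurable B -> measurable (sd A B).
Proof. by move=> mA mB; apply: measurableU; apply: measurableD. Qed.

Variable nu : {measure set T -> \bar R}.
Hypothesis nufin : (nu setT < +oo)%E.

Lemma nu_fin A : measurable A -> (nu A < +oo)%E.
Proof. by move=> mA; rewrite (le_lt_trans _ nufin)// le_measure// inE. Qed.

Definition nr (A : set T) := fine (nu A).
Lemma nuE A : measurable A -> nu A = (nr A)%:E.
Proof. by move=> mA; rewrite /nr fineK// ge0_fin_numE// nu_fin. Qed.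
Lemma nr_ge0 A : 0 <= nr A.
Proof. by rewrite /nr fine_ge0. Qed.
Lemma nr_le A B : measurable A -> measurable B -> A `<=` B -> nr A <= nr B.
Proof.
move=> mA mB AB; rewrite -lee_fin -!nuE// le_measure ?inE//.
Qed.
Lemma nrU A B : measurable A -> measurable B -> nr (A `|` B) <= nr A + nr B.
Proof.
move=> mA mB; rewrite -lee_fin EFinD -!nuE//; last exact: measurableU.
exact: measureU2.
Qed.
Lemma nr_bigU (F : nat -> set T) n : (forall k, measurable (F k)) ->
  nr (\big[setU/set0]_(k < n) F k) <= \sum_(k < n) nr (F k).
Proof.
move=> mF; elim: n => [|n IH]; first by rewrite !big_ord0 /nr measure0.
rewrite !big_ord_recr /=; apply: (le_trans (nrU _ _)) => //.
  by apply: bigsetU_measurable => k _; exact: mF.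
by rewrite lerD2r.
Qed.

Definition Sapp : set (set T) := [set A | measurable A /\
  forall e : R, 0 < e -> exists t, (nu (sd A (interp t)) < e%:E)%E].

Lemma Sapp_sigma : sigma_algebra setT Sapp.
Proof.
split.
- split; first exact: measurable0.
  move=> e e0; exists FEmp => /=.
  by rewrite /sd set0D setU0 measure0 lte_fin.
- move=> A [mA h]; split; first exact: measurableD.
  move=> e e0; have [t ht] := h e e0; exists (FCmp t) => /=.
  rewrite /sd setTD !setDE !setCK setUC setIC (setIC (~` A)).
  by rewrite /sd !setDE in ht.
- move=> A hA.
  have mA k : measurable (A k) by case: (hA k).
  have mU : measurable (\bigcup_k A k) by exact: bigcupT_measurable.
  split => // e e0.
  pose P n := \big[setU/set0]_(k < n) A k.
  have mP n : measurable (P n) by apply: bigsetU_measurable => k _; exact: mA.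
  have PU : \bigcup_n P n = \bigcup_k A k.
    apply/seteqP; split => x.
      by move=> [n _ /bigsetU_memP [k _ Ak]]; exists k.
    by move=> [k _ Ak]; exists k.+1 => //; apply/bigsetU_memP; exists k.
  have PsU n : P n `<=` \bigcup_k A k.
    by move=> x /bigsetU_memP [k _ Ak]; exists k.
  have Pnd : nondecreasing_seq P.
    move=> m n mn; apply/subsetPset => x /bigsetU_memP [k km Ak].
    apply/bigsetU_memP; exists k => //.
    exact: leq_trans km mn.
  have mPU : measurable (\bigcup_n P n) by rewrite PU.
  have cv := @nondecreasing_cvg_mu _ _ R nu P mP mPU Pnd.
  rewrite PU nuE // in cv.
  move/fine_cvgP : cv => [_ cv].
  have [N _ HN] := cvgr_dist_lt _ _ cv (e/2) ltac:(lra).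
  have := HN N (leqnn N); rewrite /= => hN.
  set U := \bigcup_k A k in mU PsU hN *.
  have hUP : nr (U `\` P N) < e / 2.
    have : (nr (U `\` P N))%:E = (nr U - nr (P N))%:E.
      rewrite -nuE; last exact: measurableD.
      rewrite measureD //; last exact: nu_fin.
      by rewrite setIidr // EFinB -(nuE mU) -(nuE (mP N)).
    move=> [->]; apply: le_lt_trans hN; exact: ler_norm.
  have ht k : exists t, (nu (sd (A k) (interp t)) < (e / 2 / N.+1%:R)%:E)%E.
    by case: (hA k) => _; apply; rewrite divr_gt0 // divr_gt0.
  have [tk htk] := choice ht.
  pose tU := fix tU (m : nat) : fm :=
    match m with 0 => FEmp | m'.+1 => FUn (tU m') (tk m') end.
  have itU m : interp (tU m) = \big[setU/set0]_(k < m) interp (tk k).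
    by elim: m => [|m IH]; rewrite ?big_ord0 // big_ord_recr /= -IH.
  exists (tU N); rewrite itU.
  set B := \big[setU/set0]_(k < N) interp (tk k).
  set Q := \big[setU/set0]_(k < N) sd (A k) (interp (tk k)).
  have mB : measurable B.
    by apply: bigsetU_measurable => k _; exact: interp_meas.
  have mQ : measurable Q.
    by apply: bigsetU_measurable => k _; apply: sd_meas => //; exact: interp_meas.
  have sub : sd U B `<=` (U `\` P N) `|` Q.
    rewrite /Q /B; move=> x [[Ux nBx]|[Bx nUx]].
      have [PNx|nPNx] := pselect ((\big[setU/set0]_(k < N) A k) x); last by left.
      move: PNx => /bigsetU_memP [k kN Akx]; right.
      apply/(bigsetU_memP (fun k => sd (A k) (interp (tk k)))).
      exists k => //; left; split => // ix; apply: nBx.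
      by apply/(bigsetU_memP (fun k => interp (tk k))); exists k.
    move/(bigsetU_memP (fun k => interp (tk k))) : Bx => [k kN ikx]; right.
    apply/(bigsetU_memP (fun k => sd (A k) (interp (tk k)))).
    exists k => //; right; split => // Akx; apply: nUx; by exists k.
  have msd : measurable (sd U B) by exact: sd_meas.
  rewrite nuE // lte_fin.
  apply: (le_lt_trans (nr_le msd _ sub)); first by apply: measurableU => //; exact: measurableD.
  apply: (le_lt_trans (nrU _ _)) => //; first exact: measurableD.
  have hQ : nr Q <= \sum_(k < N) (e / 2 / N.+1%:R).
    have h2 : forall k, measurable (sd (A k) (interp (tk k))).
      by move=> k; apply: sd_meas => //; exact: interp_meas.
    apply: (le_trans (@nr_bigU (fun k => sd (A k) (interp (tk k))) N h2)).
    apply: ler_sum => k _; apply/ltW; rewrite -lte_fin -nuE; first exact: htk.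
    by apply: sd_meas => //; exact: interp_meas.
  rewrite sumr_const card_ord in hQ.
  set c := e / 2 / N.+1%:R in hQ.
  have {}hQ : nr Q <= c * N%:R by rewrite mulr_natr.
  have c0 : 0 <= c by rewrite /c divr_ge0 // divr_ge0 // ltW.
  have hc : c * N%:R + c = e / 2.
    have hN1 : (N%:R + 1 : R) != 0 by rewrite natr1 pnatr_eq0.
    by rewrite /c -natr1; field; rewrite addrC.
  lra.
Qed.


Lemma meas_Sapp A : measurable A -> Sapp A.
Proof.
move=> mA; have := meas_sub_Gq mA.
apply: (smallest_sub Sapp_sigma).
move=> _ [i [q ->]]; split; first exact: (interp_meas (FAt i q)).
move=> e e0; exists (FAt i q).
by rewrite /sd setDv setU0 measure0 lte_fin.
Qed.

End S3.

Section P4.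
Variable R : realType.

Definition hh (n : nat) : R := ((2 ^ n)%:R)^-1.
Definition NN (n : nat) : nat := (n * 2 ^ n)%N.
Definition SM (n M : nat) (y : R) : R :=
  \sum_(0 <= k < M) hh n * (((k.+1%:R * hh n <= y)%R)%:R : R).
Definition phi n y := SM n (NN n) y - SM n (NN n) (- y).

Lemma hh_gt0 n : 0 < hh n.
Proof. by rewrite /hh invr_gt0 ltr0n expn_gt0. Qed.

Lemma NN_hh n : (NN n)%:R * hh n = n%:R.
Proof. by rewrite /NN /hh natrM mulfK // pnatr_eq0 expn_eq0. Qed.

Lemma SM_bounds n M y : 0 <= y ->
  [/\ SM n M y <= y, SM n M y <= M%:R * hh n &
      (y - hh n <= SM n M y) \/ (M%:R * hh n <= SM n M y)].
Proof.
move=> y0; have h0 := hh_gt0 n.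
elim: M => [|M [IH1 IH2 IH3]].
  by rewrite /SM big_geq // mul0r; split => //; right.
rewrite /SM big_nat_recr //= -/(SM n M y) -natr1 mulrDl mul1r.
have [hle|hlt] := leP (M%:R * hh n + hh n) y.
  rewrite mulr1; split; [lra|lra|right].
  case: IH3 => IH3; lra.
rewrite mulr0 addr0; split; [lra|lra|left].
case: IH3 => IH3; lra.
Qed.

Lemma SM_le0 n M y : y <= 0 -> SM n M y = 0.
Proof.
move=> y0; rewrite /SM big1 // => k _.
have h0 := hh_gt0 n.
have : 0 < k.+1%:R * hh n by rewrite mulr_gt0 // ltr0n.
move=> hk; have -> : (k.+1%:R * hh n <= y) = false.
  by apply/negbTE; rewrite -ltNge; lra.
by rewrite mulr0.
Qed.

Lemma phi_pos n y : 0 <= y ->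
  0 <= y - phi n y <= y /\ (y <= n%:R -> y - phi n y <= hh n).
Proof.
move=> y0; rewrite /phi (SM_le0 _ _ (y:=-y)) ?subr0; last lra.
have [h1 h2 h3] := SM_bounds n (NN n) y0.
rewrite NN_hh in h2 h3.
have : 0 <= SM n (NN n) y by rewrite /SM sumr_ge0 // => k _; rewrite mulr_ge0 // ltW // hh_gt0.
move=> h4; split; first (apply/andP; split; lra).
have h0 := hh_gt0 n; move=> yn; case: h3 => h3; lra.
Qed.

Lemma phiN n y : phi n (- y) = - phi n y.
Proof. by rewrite /phi opprK opprB. Qed.

Lemma phi_abs n y : `|y - phi n y| <= `|y|.
Proof.
have [y0|y0] := leP 0 y.
  have [[/andP[a b] _]] := phi_pos n y0.
  by rewrite !ger0_norm //; lra.
have y0' : 0 <= - y by lra.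
have [[/andP[a b] _]] := phi_pos n y0'.
rewrite phiN in a b.
rewrite ler0_norm ?ltr0_norm //; lra.
Qed.

Lemma phi_close n y : `|y| <= n%:R -> `|y - phi n y| <= hh n.
Proof.
have [y0|y0] := leP 0 y.
  have [[/andP[a b] c]] := phi_pos n y0.
  move=> yn; rewrite ger0_norm // in yn; rewrite ger0_norm; [exact: c yn | lra].
have y0' : 0 <= - y by lra.
have [[/andP[a b] c]] := phi_pos n y0'.
rewrite phiN in a b c.
rewrite ltr0_norm // => yn.
have := c yn; rewrite ler0_norm; lra.
Qed.

Lemma hh_cvg : hh n @[n --> \oo] --> (0 : R).
Proof.
have -> : hh = fun n => (2%:R^-1 : R) ^+ n.
  by apply/funext => n; rewrite /hh natrX exprVn.
apply: cvg_expr; rewrite ger0_norm ?invr_ge0 // invf_lt1 // ltr1n //.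
Qed.

End P4.

Import measurable_realfun.

Section P5.
Variable R : realType.
Local Notation T := (RNinf R).
Variable nu : {measure set T -> \bar R}.
Hypothesis nufin : (nu setT < +oo)%E.
Variable p : R.
Hypothesis hp : 1 <= p.

Definition sumf (K : Type) (c : K -> R) (s : seq (K * set T)) (x : T) : R :=
  \sum_(pr <- s) c pr.1 * \1_(pr.2) x.

Definition allm (K : Type) (s : seq (K * set T)) :=
  forall pr, List.In pr s -> measurable pr.2.

Lemma sumf_cons K c (a : K * set T) s :
  sumf c (a :: s) = (fun x => c a.1 * \1_(a.2) x) \+ sumf c s.
Proof. by apply/funext => x; rewrite /sumf big_cons. Qed.

Lemma sumf_meas K c (s : seq (K * set T)) : allm s ->
  measurable_fun setT (sumf c s).
Proof.
elim: s => [|a s IH] hs.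
  have -> : sumf c [::] = cst 0 by apply/funext => x; rewrite /sumf big_nil.
  exact: measurable_cst.
rewrite sumf_cons; apply: measurable_funD.
  apply: measurable_funM; first exact: measurable_cst.
  by apply: measurable_indic; apply: hs; left.
by apply: IH => pr hpr; apply: hs; right.
Qed.

Lemma indic_le (A B : set T) x : A `<=` B -> (\1_A x : R) <= \1_B x.
Proof.
move=> AB; rewrite !indicE.
case: (boolP (x \in A)) => [/set_mem/AB/mem_set ->//|_].
by case: (x \in B).
Qed.

Lemma indic_sd (A B : set T) x : `|(\1_A x : R) - \1_B x| = \1_(sd A B) x.
Proof.
rewrite !indicE.
case: (boolP (x \in A)) => xA; case: (boolP (x \in B)) => xB.
- rewrite (_ : (x \in sd A B) = false) ?subrr ?normr0 //.
  apply/negbTE/negP => /set_mem [[_ /(_ (set_mem xB))]|[_ /(_ (set_mem xA))]] //.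
- rewrite (_ : (x \in sd A B) = true) ?subr0 ?normr1 //; apply/mem_set.
  by left; split; [exact: set_mem| move=> /mem_set h; rewrite h in xB].
- rewrite (_ : (x \in sd A B) = true) ?sub0r ?normrN ?normr1 //; apply/mem_set.
  by right; split; [exact: set_mem| move=> /mem_set h; rewrite h in xA].
- rewrite (_ : (x \in sd A B) = false) ?subrr ?normr0 //.
  apply/negbTE/negP => /set_mem [[/mem_set h _]|[/mem_set h _]].
    by rewrite h in xA.
  by rewrite h in xB.
Qed.

Lemma diff_bound K (c : K -> R) (tf : set T -> fm) (s : seq (K * set T)) x :
  `|sumf c s x - sumf c [seq (pr.1, interp (tf pr.2)) | pr <- s] x| <=
   (\sum_(pr <- s) `|c pr.1|) *
     \1_(\big[setU/set0]_(pr <- s) sd pr.2 (interp (tf pr.2))) x.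
Proof.
elim: s => [|a s IH]; first by rewrite /sumf !big_nil subrr normr0 mul0r.
rewrite /sumf /= !big_cons -/(sumf c s x).
rewrite -/(sumf c [seq (pr.1, interp (tf pr.2)) | pr <- s] x).
set S1 := sumf c s x in IH *.
set S2 := sumf c [seq (pr.1, interp (tf pr.2)) | pr <- s] x in IH *.
set Es := \big[setU/set0]_(pr <- s) sd pr.2 (interp (tf pr.2)) in IH *.
set Cs := \sum_(pr <- s) `|c pr.1| in IH *.
have -> : c a.1 * \1_(a.2) x + S1 - (c a.1 * \1_(interp (tf a.2)) x + S2) =
  c a.1 * (\1_(a.2) x - \1_(interp (tf a.2)) x) + (S1 - S2).
  by rewrite mulrBr; ring.
apply: (le_trans (ler_normD _ _)).
rewrite normrM indic_sd.
have i1 := @indic_le (sd a.2 (interp (tf a.2))) (sd a.2 (interp (tf a.2)) `|` Es) x (@subsetUl _ _ _).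
have i2 := @indic_le Es (sd a.2 (interp (tf a.2)) `|` Es) x (@subsetUr _ _ _).
have c0 : 0 <= `|c a.1| by [].
have Cs0 : 0 <= Cs by rewrite sumr_ge0.
rewrite mulrDl; apply: lerD.
  exact: ler_wpM2l.
by apply: (le_trans IH); exact: ler_wpM2l.
Qed.

Lemma bigU_meas_seq K (F : K * set T -> set T) (s : seq (K * set T)) :
  (forall pr, List.In pr s -> measurable (F pr)) ->
  measurable (\big[setU/set0]_(pr <- s) F pr).
Proof.
elim: s => [|a s IH] h; first by rewrite big_nil.
rewrite big_cons; apply: measurableU; first by apply: h; left.
by apply: IH => pr hpr; apply: h; right.
Qed.

Lemma nr_bigU_seq K (F : K * set T -> set T) (s : seq (K * set T)) :
  (forall pr, List.In pr s -> measurable (F pr)) ->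
  nr nu (\big[setU/set0]_(pr <- s) F pr) <= \sum_(pr <- s) nr nu (F pr).
Proof.
elim: s => [|a s IH] h; first by rewrite !big_nil /nr measure0.
rewrite !big_cons; apply: (le_trans (nrU nufin _ _)).
- by apply: h; left.
- by apply: bigU_meas_seq => pr hpr; apply: h; right.
by rewrite lerD2l; apply: IH => pr hpr; apply: h; right.
Qed.

Lemma allm_map K (tf : set T -> fm) (s : seq (K * set T)) :
  allm [seq (pr.1, interp (tf pr.2)) | pr <- s].
Proof. by move=> pr /List.in_map_iff [q [<- _]]; exact: interp_meas. Qed.

Lemma sum_le_size (I : Type) (s : seq I) (F : I -> R) d :
  (forall i, List.In i s -> F i <= d) -> \sum_(i <- s) F i <= (size s)%:R * d.
Proof.
elim: s => [|a s IH] h; first by rewrite big_nil mul0r.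
rewrite big_cons /= -natr1 mulrDl mul1r addrC; apply: lerD.
  by apply: IH => i hi; apply: h; right.
by apply: h; left.
Qed.

Lemma approx_list K (c : K -> R) (s : seq (K * set T)) (eta : R) :
  0 < eta -> allm s ->
  exists tf : set T -> fm,
   (\int[nu]_x ((`|sumf c s x - sumf c [seq (pr.1, interp (tf pr.2)) | pr <- s] x|
                 `^ p)%:E) < eta%:E)%E.
Proof.
move=> eta0 hs.
set C := \sum_(pr <- s) `|c pr.1|.
have C0 : 0 <= C by rewrite sumr_ge0.
set k := C `^ p.
have k0 : 0 <= k by exact: powR_ge0.
pose delta := eta / ((k + 1) * ((size s)%:R + 1)).
have d0 : 0 < delta.
  by rewrite divr_gt0 // mulr_gt0 // ltr_pwDr // ltr01.
have hex : forall A : set T, exists t, measurable A ->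
    (nu (sd A (interp t)) < delta%:E)%E.
  move=> A; have [mA|nmA] := pselect (measurable A); last by exists FEmp.
  have [_ h] := meas_Sapp nufin mA; have [t ht] := h delta d0.
  by exists t.
have [tf htf] := choice hex.
exists tf.
set E := \big[setU/set0]_(pr <- s) sd pr.2 (interp (tf pr.2)).
have msd : forall pr, List.In pr s -> measurable (sd pr.2 (interp (tf pr.2))).
  by move=> pr hpr; apply: sd_meas; [exact: hs|exact: interp_meas].
have mE : measurable E by exact: bigU_meas_seq.
have p0 : 0 < p := lt_le_trans ltr01 hp.
have pt x : `|sumf c s x - sumf c [seq (pr.1, interp (tf pr.2)) | pr <- s] x| `^ p
    <= k * \1_E x.
  have h1 := diff_bound c tf s x.
  apply: (le_trans (ge0_ler_powR (ltW p0) _ _ h1)).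
  - by rewrite nnegrE.
  - by rewrite nnegrE mulr_ge0 // indicE.
  rewrite powRM // ?indicE //.
  rewrite /k; case: (x \in E) => /=; first by rewrite powR1.
  by rewrite powR0 // gt_eqF.
have mdiff : measurable_fun setT
    (fun x => sumf c s x - sumf c [seq (pr.1, interp (tf pr.2)) | pr <- s] x).
  exact: (measurable_funB (@sumf_meas K c s hs) (@sumf_meas K c _ (@allm_map K tf s))).
apply: (@le_lt_trans _ _ (\int[nu]_x ((k * \1_E x)%:E))%E).
  apply: ge0_le_integral => //.
  - apply: measurableT_comp => //.
    apply: (measurableT_comp (measurable_powR _)) => //.
    exact: measurableT_comp.
  - apply: measurableT_comp => //; apply: measurable_funM.
      exact: measurable_cst.
    exact: measurable_indic.
  - by move=> x _; rewrite lee_fin.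
under eq_integral do rewrite EFinM.
rewrite ge0_integralZl_EFin //; last first.
  by apply: measurableT_comp => //; exact: measurable_indic.
rewrite integral_indic // setIT (nuE nufin mE) -EFinM lte_fin.
have hE : nr nu E <= (size s)%:R * delta.
  apply: (le_trans (nr_bigU_seq msd)).
  apply: sum_le_size => pr hpr; apply/ltW.
  by rewrite -lte_fin -(nuE nufin (msd _ hpr)); apply: htf; exact: hs.
have hE0 : 0 <= nr nu E by exact: nr_ge0.
have : k * nr nu E <= k * ((size s)%:R * delta) by exact: ler_wpM2l.
have hd : (k + 1) * ((size s)%:R + 1) * delta = eta.
  have z0 : 0 <= (size s)%:R :> R by [].
  by rewrite /delta mulrC divfK //; apply/lt0r_neq0; apply: mulr_gt0; lra.
set z := (size s)%:R in hd *.
have z0 : 0 <= z by rewrite /z.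
move=> h1; apply: (le_lt_trans h1); rewrite -hd.
have : 0 < delta * (k + z + 1) by rewrite mulr_gt0 //; lra.
nra.
Qed.

End P5.


Section P6.
Variable R : realType.
Local Notation T := (RNinf R).
Variable nu : {measure set T -> \bar R}.
Hypothesis nufin : (nu setT < +oo)%E.
Variable p : R.
Hypothesis hp : 1 <= p.

Let p0 : 0 < p. Proof. exact: lt_le_trans ltr01 hp. Qed.

Lemma LN_lt (h : T -> R) eta : 0 < eta ->
  (\int[nu]_x ((`|h x| `^ p)%:E) < (eta `^ p)%:E)%E ->
  ('N[nu]_p%:E [EFin \o h] < eta%:E)%E.
Proof.
move=> eta0 hI; rewrite unlock /=.
have I0 : (0 <= \int[nu]_x ((`|h x| `^ p)%:E))%E.
  by apply: integral_ge0 => x _; rewrite lee_fin powR_ge0.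
have If : (\int[nu]_x ((`|h x| `^ p)%:E))%E \is a fin_num.
  by rewrite ge0_fin_numE // (lt_trans hI) // ltry.
rewrite -(fineK If) poweR_EFin lte_fin.
have : fine (\int[nu]_x ((`|h x| `^ p)%:E))%E < eta `^ p.
  by rewrite -lte_fin fineK.
move=> hlt.
have -> : eta = (eta `^ p) `^ p^-1.
  by rewrite -powRrM mulfV ?gt_eqF // powRr1 // ltW.
apply: gt0_ltr_powR => //; first by rewrite invr_gt0.
- by rewrite nnegrE fine_ge0.
- by rewrite nnegrE powR_ge0.
Qed.

Lemma bounded_Lfun (g : T -> R) C : measurable_fun setT g ->
  (forall x, `|g x| <= C) -> g \in Lfun nu p%:E.
Proof.
move=> mg gC.
rewrite inE/=; apply/andP; split; rewrite inE//=.
rewrite /finite_norm unlock poweR_lty//.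
under eq_integral do rewrite abse_EFin poweR_EFin.
have C0 : 0 <= C by apply: le_trans (gC point).
apply: (@le_lt_trans _ _ (\int[nu]_x (cst ((C `^ p)%:E) x))%E).
  apply: ge0_le_integral => //.
  - apply: measurableT_comp => //.
    apply: (measurableT_comp (measurable_powR _)) => //.
    exact: measurableT_comp.
  - move=> x _; rewrite lee_fin; apply: ge0_ler_powR; rewrite ?nnegrE //.
    exact: ltW.
rewrite integral_cst //= lte_mul_pinfty //.
by rewrite lee_fin powR_ge0.
Qed.

Definition coef (bn : bool * nat) : R := (-1) ^+ bn.1 * hh R bn.2.

Definition stair (n : nat) (f : T -> R) : seq ((bool * nat) * set T) :=
  [seq ((false, n), f @^-1` [set y | (k.+1%:R * hh R n <= y)%R]) | k <- iota 0 (NN n)] ++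
  [seq ((true, n), f @^-1` [set y | (k.+1%:R * hh R n <= - y)%R]) | k <- iota 0 (NN n)].

Lemma indic_pre (f : T -> R) (b : R -> bool) x :
  \1_(f @^-1` [set y | b y]) x = (b (f x))%:R :> R.
Proof.
rewrite indicE; case hb : (b (f x)); first by rewrite mem_set.
apply/eqP; rewrite pnatr_eq0 eqb0; apply/negP => /set_mem.
by rewrite /preimage /= hb.
Qed.

Lemma stair_eq n f x : sumf coef (stair n f) x = phi n (f x).
Proof.
rewrite /sumf big_cat !big_map /phi /SM /index_iota subn0; congr (_ + _).
  by apply: eq_bigr => k _; rewrite indic_pre /coef /= expr0 mul1r.
rewrite -sumrN; apply: eq_bigr => k _.
by rewrite indic_pre /coef /= expr1 mulN1r mulNr.
Qed.

Lemma stair_allm n f : measurable_fun setT f -> allm (stair n f).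
Proof.
move=> mf pr /List.in_app_iff [] /List.in_map_iff [k [<- _]] /=.
- rewrite -[X in measurable X]setTI; apply: mf => //.
  have -> : [set y : R | (k.+1%:R * hh R n <= y)%R] = `[k.+1%:R * hh R n, +oo[%classic.
    by apply/seteqP; split => y /=; rewrite in_itv /= andbT.
  exact: measurable_itv.
- rewrite -[X in measurable X]setTI; apply: mf => //.
  have -> : [set y : R | (k.+1%:R * hh R n <= - y)%R] = `]-oo, - (k.+1%:R * hh R n)]%classic.
    by apply/seteqP; split => y /=; rewrite in_itv /= lerNr.
  exact: measurable_itv.
Qed.

Lemma sumf_bound K (c : K -> R) s x : `|sumf c s x| <= \sum_(pr <- s) `|c pr.1|.
Proof.
rewrite /sumf; apply: (le_trans (ler_norm_sum _ _ _)); apply: ler_sum => pr _.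
rewrite normrM -{2}(mulr1 `|c pr.1|); apply: ler_wpM2l => //.
by rewrite indicE; case: (_ \in _); rewrite ?normr1 ?normr0.
Qed.

Lemma Lfun_meas (f : T -> R) : f \in Lfun nu p%:E -> measurable_fun setT f.
Proof. by rewrite inE => /andP[/[!inE]/= mf] _. Qed.

Lemma phif_meas n (f : T -> R) : measurable_fun setT f -> measurable_fun setT (fun x => phi n (f x)).
Proof.
move=> mf; have -> : (fun x => phi n (f x)) = sumf coef (stair n f).
  by apply/funext => x; rewrite stair_eq.
exact: (sumf_meas coef (@stair_allm n f mf)).
Qed.

Lemma dct_step (f : T -> R) : f \in Lfun nu p%:E -> forall eta, 0 < eta ->
  exists n, (\int[nu]_x ((`|f x - phi n (f x)| `^ p)%:E) < eta%:E)%E.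
Proof.
move=> hf eta eta0.
have mf := Lfun_meas hf.
have ig := Lfun_integrable hp hf.
pose F n (x : T) := ((`|f x - phi n (f x)| `^ p)%:E : \bar R).
have mF n : measurable_fun setT (F n).
  apply: measurableT_comp => //.
  apply: (measurableT_comp (measurable_powR _)) => //.
  apply: measurableT_comp => //.
  exact: (measurable_funB mf (phif_meas n mf)).
have m0 : measurable_fun (@setT T) (cst (0 : \bar R)) by exact: measurable_cst.
have FF : {ae nu, forall x, setT x -> F ^~ x @ \oo --> (cst 0 : T -> \bar R) x}.
  apply: aeW => x _ /=.
  apply: cvg_EFin; first exact: nearW.
  apply: (@squeeze_cvgr _ _ _ _ (cst 0) (hh R)).
  - near=> n.
    have hn : `|f x| <= n%:R by near: n; exact: nbhs_infty_ger.
    have h1 := phi_close hn.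
    rewrite /= /F /= powR_ge0 /=.
    set a := `|f x - phi n (f x)| in h1 *.
    have a0 : 0 <= a by rewrite /a.
    have h2 : hh R n <= 1 by rewrite /hh invf_le1 ?ltr0n ?expn_gt0 // ler1n expn_gt0.
    have [->|a0'] := eqVneq a 0; first by rewrite powR0 ?gt_eqF // ltW // hh_gt0.
    have ha : 0 < a <= 1 by rewrite lt0r a0' a0 /= (le_trans h1).
    exact: le_trans (ge1r_powR ha hp) h1.
  - exact: cvg_cst.
  - exact: hh_cvg.
have Fg : {ae nu, forall x n, setT x -> (`|F n x| <= (`|f x| `^ p)%:E)%E}.
  apply: aeW => x n _.
  rewrite /F gee0_abs ?lee_fin ?powR_ge0 //.
  apply: ge0_ler_powR; rewrite ?nnegrE //; first exact: ltW.
  exact: phi_abs.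
have [_ cv _] := dominated_convergence measurableT mF m0 FF ig Fg.
have ev : (fun n => \int[nu]_(x in setT) `|F n x - cst 0 x|)%E =
    (fun n => \int[nu]_x F n x)%E.
  apply/funext => n; apply: eq_integral => x _.
  by rewrite /F /cst /= ?subr0 ger0_norm // powR_ge0.
rewrite /= ev in cv.
move/fine_cvgP : cv => [fin cvr].
have [N1 _ HN1] := cvgr_dist_lt _ _ cvr eta eta0.
have [N2 _ HN2] := fin.
exists (maxn N1 N2).
have h1 := HN1 (maxn N1 N2) (leq_maxl _ _).
have h2 := HN2 (maxn N1 N2) (leq_maxr _ _).
rewrite /= sub0r normrN in h1.
rewrite -(fineK h2) lte_fin.
by apply: le_lt_trans h1; exact: ler_norm.
Unshelve. all: by end_near.
Qed.

End P6.

Unset Implicit Arguments. Set Strict Implicit.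

Theorem lemma2p3 (R : realType)
  (mu : {measure set (RNinf R) -> \bar R})
  (hmu : forall A : set (RNinf R), measurable A -> mu A = mu_star A)
  (M : set (RNinf R)) (mM : measurable M)
  (hM : (mu M < +oo)%E)
  (p : R) (hp : 1 <= p) :
  exists D : set (RNinf R -> R),
    countable D /\
    (forall g, D g -> g \in Lfun (mrestr mu mM) p%:E) /\
    (forall f, f \in Lfun (mrestr mu mM) p%:E ->
       forall eps : R, 0 < eps ->
       exists2 g, D g &
         ('N[mrestr mu mM]_p%:E [(fun x => (f x - g x)%:E)] < eps%:E)%E).
Proof.
have nufin : (mrestr mu mM setT < +oo)%E by rewrite /mrestr setTI.
pose fmp (s : seq ((bool * nat) * fm)) : seq ((bool * nat) * set (RNinf R)) :=
  [seq (pr.1, interp pr.2) | pr <- s].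
exists [set g | exists s, g = sumf (@coef R) (fmp s)].
split.
  have -> : [set g | exists s, g = sumf (@coef R) (fmp s)] =
      (fun s => sumf (@coef R) (fmp s)) @` setT.
    by apply/seteqP; split => g /= [s]; [move=> ->; exists s|move=> _ <-; exists s].
  exact: (card_le_trans (card_image_le _ _) (countableP _)).
split.
  move=> g [s ->]; apply: (bounded_Lfun nufin hp (C := \sum_(pr <- fmp s) `|(@coef R) pr.1|)).
    apply: sumf_meas => pr /List.in_map_iff [q [<- _]]; exact: interp_meas.
  by move=> x; exact: sumf_bound.
move=> f hf eps eps0.
have p0 : 0 < p by exact: lt_le_trans ltr01 hp.
set e2 := eps / 2.
have e20 : 0 < e2 by rewrite /e2 divr_gt0.
have e2p : 0 < e2 `^ p by rewrite powR_gt0.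
have [n hn] := dct_step hp hf e2p.
have mf := Lfun_meas hf.
have [tf htf] := approx_list nufin hp (@coef R) e2p (@stair_allm R n f mf).
exists (sumf (@coef R) (fmp [seq (pr.1, tf pr.2) | pr <- stair n f])).
  by exists [seq (pr.1, tf pr.2) | pr <- stair n f].
have -> : fmp [seq (pr.1, tf pr.2) | pr <- stair n f] =
    [seq (pr.1, interp (tf pr.2)) | pr <- stair n f] by rewrite /fmp -map_comp.
set g := sumf (@coef R) [seq (pr.1, interp (tf pr.2)) | pr <- stair n f] in htf *.
pose a := fun x => f x - phi n (f x).
pose b := fun x => phi n (f x) - g x.
have ma : measurable_fun setT a := measurable_funB mf (phif_meas n mf).
have mb : measurable_fun setT b.
  exact: (measurable_funB (phif_meas n mf) (sumf_meas (@coef R) (@allm_map R _ tf (stair n f)))).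
have N1 : ('N[mrestr mu mM]_p%:E [EFin \o a] < e2%:E)%E by exact: (LN_lt hp).
have N2 : ('N[mrestr mu mM]_p%:E [EFin \o b] < e2%:E)%E.
  apply: (LN_lt hp) => //.
  under eq_integral do rewrite /b -stair_eq.
  exact: htf.
rewrite (@eq_Lnorm _ _ _ (mrestr mu mM) _ _ (EFin \o (a \+ b))); last first.
  by move=> x; rewrite /a /b /= addrA subrK.
apply: (le_lt_trans (minkowski_EFin (mrestr mu mM) ma mb hp)).
have -> : eps = e2 + e2 by rewrite /e2; field.
by rewrite EFinD; exact: lteD.
Qed.
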